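(* Let $A$ be a real $n\times n$ matrix and suppose there is $\kappa_0>0$ with $u^TAu\ge\kappa_0^2|u|^2$ for all $u\in\mathbb R^n$. (i) The map $u\mapsto Au$ is $2$-monotone. (ii) If $A$ is symmetric and $\alpha>0$, then $\widetilde F_{A,\alpha}(u)=|A^{1/2}u|^\alpha Au$ is $(\alpha+2)$-monotone. (iii) Let $F_{A,\alpha}(u)=|u|^\alpha Au$ with $\alpha>0$. If $\alpha=\kappa_0^2/\|A\|_{\mathrm{op}}$, then $F_{A,\alpha}$ is monotone; if $\alpha<\kappa_0^2/\|A\|_{\mathrm{op}}$, then $F_{A,\alpha}$ is $(\alpha+2)$-monotone.
   Context: $|\cdot|$ is the Euclidean norm, $\|A\|_{\mathrm{op}}=\max_{|x|=1}|Ax|$, and for symmetric positive definite $A$, $A^{1/2}$ is its symmetric positive definite square root. A map $F:\mathbb R^n\to\mathbb R^n$ is monotone if $(F(u)-F(v))\cdot(u-v)\ge0$ for all $u,v$; for $\beta>0$ it is $\beta$-monotone if there is $C>0$ with $(F(u)-F(v))\cdot(u-v)\ge C|u-v|^\beta$ for all $u,v$. *)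

(* Defs.v *)
From HB Require Import structures.
From mathcomp Require Import all_boot all_order all_algebra.
From mathcomp Require Import all_classical all_reals exp.
From Stdlib Require Import ClassicalEpsilon.
Set Implicit Arguments. Unset Strict Implicit. Unset Printing Implicit Defensive.
Import Order.TTheory GRing.Theory Num.Theory.
Local Open Scope ring_scope.
Local Open Scope classical_set_scope.

Definition dotv (R : realType) (n : nat) (u v : 'cV[R]_n) : R :=
  \sum_(i < n) u i 0 * v i 0.

Definition vnorm (R : realType) (n : nat) (u : 'cV[R]_n) : R :=
  Num.sqrt (dotv u u).

Definition opnorm (R : realType) (n : nat) (A : 'M[R]_n) : R :=
  sup [set vnorm (A *m x) | x in [set x : 'cV[R]_n | vnorm x = 1]].

Definition symmx (R : realType) (n : nat) (A : 'M[R]_n) : Prop :=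
  A^T = A.

Definition posdefmx (R : realType) (n : nat) (A : 'M[R]_n) : Prop :=
  symmx A /\ forall u : 'cV[R]_n, u != 0 -> 0 < dotv u (A *m u).

(* A^{1/2}: the symmetric positive definite square root (chosen by epsilon;
   it is unique when A is symmetric positive definite). *)
Definition sqrtmx (R : realType) (n : nat) (A : 'M[R]_n) : 'M[R]_n :=
  epsilon (inhabits 0) (fun S : 'M[R]_n => posdefmx S /\ S *m S = A).

Definition monotone_map (R : realType) (n : nat) (F : 'cV[R]_n -> 'cV[R]_n) : Prop :=
  forall u v, 0 <= dotv (F u - F v) (u - v).

Definition beta_monotone (R : realType) (n : nat) (beta : R)
  (F : 'cV[R]_n -> 'cV[R]_n) : Prop :=
  exists2 C : R, 0 < C &
    forall u v, C * (vnorm (u - v)) `^ beta <= dotv (F u - F v) (u - v).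

(* Main.v *)
Require Import Defs.
From HB Require Import structures.
From mathcomp Require Import all_boot all_order all_algebra.
From mathcomp Require Import all_classical all_reals exp.
From mathcomp Require Import complex spectral sesquilinear.
From mathcomp Require Import ring lra.
From Stdlib Require Import ClassicalEpsilon.
Import Order.TTheory GRing.Theory Num.Theory.
Local Open Scope ring_scope.

Module Helpers.
Set Implicit Arguments. Unset Strict Implicit.

Section Vec.
Variables (R : realType) (n : nat).
Implicit Types (u v w : 'cV[R]_n) (a : R).

Lemma dotvC u v : dotv u v = dotv v u.
Proof. by apply: eq_bigr => i _; rewrite mulrC. Qed.

Lemma dotvDl u v w : dotv (u + v) w = dotv u w + dotv v w.
Proof. by rewrite /dotv -big_split; apply: eq_bigr => i _; rewrite mxE mulrDl. Qed.

Lemma dotvZl a u w : dotv (a *: u) w = a * dotv u w.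
Proof. by rewrite /dotv mulr_sumr; apply: eq_bigr => i _; rewrite mxE mulrA. Qed.

Lemma dotvNl u w : dotv (- u) w = - dotv u w.
Proof. by rewrite -scaleN1r dotvZl mulN1r. Qed.

Lemma dotvBl u v w : dotv (u - v) w = dotv u w - dotv v w.
Proof. by rewrite dotvDl dotvNl. Qed.

Lemma dotvDr u v w : dotv w (u + v) = dotv w u + dotv w v.
Proof. by rewrite dotvC dotvDl !(dotvC w). Qed.

Lemma dotvZr a u w : dotv w (a *: u) = a * dotv w u.
Proof. by rewrite dotvC dotvZl dotvC. Qed.

Lemma dotvNr u w : dotv w (- u) = - dotv w u.
Proof. by rewrite dotvC dotvNl dotvC. Qed.

Lemma dotvBr u v w : dotv w (u - v) = dotv w u - dotv w v.
Proof. by rewrite dotvDr dotvNr. Qed.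

Lemma dotv0l u : dotv 0 u = 0.
Proof. by rewrite /dotv big1 // => i _; rewrite mxE mul0r. Qed.

Lemma dotv_ge0 u : 0 <= dotv u u.
Proof. by apply: sumr_ge0 => i _; rewrite -expr2 sqr_ge0. Qed.

Lemma dotv_eq0 u : dotv u u = 0 -> u = 0.
Proof.
move=> /psumr_eq0P H; apply/matrixP => i j; rewrite !mxE (ord1 j).
have /eqP := H (fun i _ => ltac:(by rewrite -expr2 sqr_ge0)) i isT.
by rewrite mulf_eq0 orbb => /eqP.
Qed.

Lemma dotv_mulmx (A : 'M[R]_n) u v : dotv u (A *m v) = dotv (A^T *m u) v.
Proof.
rewrite /dotv.
under eq_bigr do rewrite mxE mulr_sumr.
under [RHS]eq_bigr do rewrite mxE mulr_suml.
rewrite exchange_big /=; apply: eq_bigr => i _; apply: eq_bigr => j _.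
by rewrite mxE mulrCA mulrA.
Qed.

Lemma vnorm_ge0 u : 0 <= vnorm u.
Proof. exact: sqrtr_ge0. Qed.

Lemma vnorm_sq u : vnorm u ^+ 2 = dotv u u.
Proof. by rewrite sqr_sqrtr // dotv_ge0. Qed.

Lemma CS2 u v : dotv u v ^+ 2 <= dotv u u * dotv v v.
Proof.
have [v0|vn0] := eqVneq (dotv v v) 0.
  by rewrite (dotv_eq0 v0) (dotvC u 0) !dotv0l expr0n /= mulr0.
have bgt : 0 < dotv v v by rewrite lt_neqAle eq_sym vn0 dotv_ge0.
have := dotv_ge0 (dotv v v *: u - dotv u v *: v).
rewrite !(dotvBl, dotvBr, dotvZl, dotvZr) (dotvC v u).
set a := dotv u v; set b := dotv v v; set c := dotv u u.
move=> H; rewrite mulrC -subr_ge0 -(pmulr_rge0 _ bgt).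
rewrite -/b; apply: le_trans H _; rewrite le_eqVlt; apply/orP; left; apply/eqP; ring.
Qed.

Lemma CS u v : `|dotv u v| <= vnorm u * vnorm v.
Proof.
rewrite -(ler_pXn2r (isT : (0 < 2)%N)) ?nnegrE ?normr_ge0 ?mulr_ge0 ?vnorm_ge0 //.
by rewrite real_normK ?num_real // exprMn !vnorm_sq CS2.
Qed.

Lemma dotv_le u v : dotv u v <= vnorm u * vnorm v.
Proof. exact: le_trans (ler_norm _) (CS u v). Qed.

Lemma vnormD u v : vnorm (u + v) <= vnorm u + vnorm v.
Proof.
rewrite -(ler_pXn2r (isT : (0 < 2)%N)) ?nnegrE ?addr_ge0 ?vnorm_ge0 //.
rewrite vnorm_sq !(dotvDl, dotvDr) sqrrD !vnorm_sq (dotvC v u).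
have := dotv_le u v; lra.
Qed.

Lemma vnormZ a u : vnorm (a *: u) = `|a| * vnorm u.
Proof.
by rewrite /vnorm dotvZl dotvZr mulrA -expr2 sqrtrM ?sqr_ge0 // sqrtr_sqr.
Qed.

Lemma vnormN u : vnorm (- u) = vnorm u.
Proof. by rewrite -scaleN1r vnormZ normrN1 mul1r. Qed.

Lemma vnormB u v : vnorm (u - v) <= vnorm u + vnorm v.
Proof. by rewrite -(vnormN v) vnormD. Qed.

Lemma vnorm_revB u v : vnorm u - vnorm v <= vnorm (u - v).
Proof. have := vnormD (u - v) v; rewrite subrK; lra. Qed.

End Vec.

Section Op.
Variables (R : realType) (n : nat).
Implicit Types (u v w x : 'cV[R]_n) (a : R).

Lemma vnorm_eq0 u : vnorm u = 0 -> u = 0.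
Proof.
by move=> H; apply: dotv_eq0; rewrite -vnorm_sq H expr0n.
Qed.

Lemma vnorm0 : vnorm (0 : 'cV[R]_n) = 0.
Proof. by rewrite /vnorm dotv0l sqrtr0. Qed.

Lemma mulmx_entry (A : 'M[R]_n) x i : (A *m x) i 0 = dotv (row i A)^T x.
Proof. by rewrite mxE; apply: eq_bigr => j _; rewrite !mxE. Qed.

Lemma vnorm_mulmx_le (A : 'M[R]_n) x :
  vnorm (A *m x) <= Num.sqrt (\sum_i dotv (row i A)^T (row i A)^T) * vnorm x.
Proof.
rewrite -(ler_pXn2r (isT : (0 < 2)%N)) ?nnegrE ?mulr_ge0 ?vnorm_ge0 ?sqrtr_ge0 //.
rewrite exprMn !vnorm_sq sqr_sqrtr; last by apply: sumr_ge0 => i _; exact: dotv_ge0.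
rewrite {1}/dotv mulr_suml; apply: ler_sum => i _.
by rewrite mulmx_entry -expr2; exact: CS2.
Qed.

Lemma opnorm_le (A : 'M[R]_n) v : vnorm (A *m v) <= opnorm A * vnorm v.
Proof.
have [->|vn0] := eqVneq v 0; first by rewrite mulmx0 vnorm0 mulr0.
have vp : 0 < vnorm v.
  rewrite lt_neqAle vnorm_ge0 andbT; apply/eqP => /esym /vnorm_eq0 /eqP.
  by rewrite (negbTE vn0).
set x := (vnorm v)^-1 *: v.
have x1 : vnorm x = 1 by rewrite vnormZ ger0_norm ?invr_ge0 ?ltW // mulVf ?gt_eqF.
have Ex : vnorm (A *m x) = vnorm (A *m v) / vnorm v.
  by rewrite /x -scalemxAr vnormZ ger0_norm ?invr_ge0 ?ltW // mulrC.
have : vnorm (A *m x) <= opnorm A.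
  apply: ub_le_sup; last by exists x.
  exists (Num.sqrt (\sum_i dotv (row i A)^T (row i A)^T)) => _ [y /= y1 <-].
  by have := vnorm_mulmx_le A y; rewrite y1 mulr1.
by rewrite Ex ler_pdivrMr.
Qed.

End Op.

Section Pow.
Variable R : realType.
Implicit Types (a b t al : R).

Lemma ln_le_sub1 t : 0 < t -> ln t <= t - 1.
Proof. move=> t0; have := expR_ge1Dx (ln t); rewrite lnK //; lra. Qed.

Lemma key_t al t : 0 < al -> 0 < t -> (1 - t `^ al) * t <= al * (1 - t).
Proof.
move=> al0 t0.
have h1 : 1 - t `^ al <= - (al * ln t).
  rewrite /powR gt_eqF //; have := expR_ge1Dx (al * ln t); lra.
have h2 : - (t * ln t) <= 1 - t.
  have ti : 0 < t^-1 by rewrite invr_gt0.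
  have := ln_le_sub1 ti; rewrite lnV // => h.
  have : t * (- ln t) <= t * (t^-1 - 1) by rewrite ler_pM2l.
  by rewrite mulrBr mulfV ?gt_eqF // mulr1 mulrN.
have : (1 - t `^ al) * t <= - (al * ln t) * t by rewrite ler_pM2r.
move=> h3; apply: le_trans h3 _.
have -> : - (al * ln t) * t = al * (- (t * ln t)) by ring.
by rewrite ler_pM2l.
Qed.

Lemma key_pow al a b : 0 < al -> 0 <= b -> b <= a ->
  (a `^ al - b `^ al) * b <= al * a `^ al * (a - b).
Proof.
move=> al0 b0 ba.
have [bz|bp] := eqVneq b 0.
  rewrite bz in ba *; rewrite mulr0 subr0.
  apply: mulr_ge0; [apply: mulr_ge0; [exact: ltW | exact: powR_ge0] | exact: ba].
have bp' : 0 < b by rewrite lt_neqAle eq_sym bp.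
have ap : 0 < a by apply: lt_le_trans ba.
set t := b / a.
have tp : 0 < t by rewrite divr_gt0.
have bE : b = a * t by rewrite /t mulrCA mulfV ?gt_eqF // mulr1.
have := key_t al0 tp => H.
rewrite bE powRM; [| exact: ltW | exact: ltW].
have -> : (a `^ al - a `^ al * t `^ al) * (a * t) = (a `^ al * a) * ((1 - t `^ al) * t) by ring.
have -> : al * a `^ al * (a - a * t) = (a `^ al * a) * (al * (1 - t)) by ring.
by rewrite ler_pM2l // mulr_gt0 // powR_gt0.
Qed.

End Pow.

Section P3.
Variables (R : realType) (n : nat) (A : 'M[R]_n) (kappa0 : R).
Hypothesis hA : forall u : 'cV[R]_n, kappa0 ^+ 2 * vnorm u ^+ 2 <= dotv u (A *m u).

Lemma powR_le (al x y : R) : 0 <= al -> 0 <= x -> x <= y -> x `^ al <= y `^ al.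
Proof.
move=> al0 x0 xy; apply: (ge0_ler_powR al0) => //; rewrite nnegrE //.
exact: le_trans xy.
Qed.

Lemma powR_add2 (al x : R) : 0 < al -> 0 <= x -> x `^ (al + 2) = x `^ al * x ^+ 2.
Proof.
move=> al0 x0; rewrite powRD; last by apply/implyP => /eqP; lra.
by rewrite (powR_mulrn 2 x0).
Qed.

Definition Dm (F : 'cV[R]_n -> 'cV[R]_n) u v := dotv (F u - F v) (u - v).

Lemma Dm_sym F u v : Dm F u v = Dm F v u.
Proof. by rewrite /Dm -[F u - F v]opprB -[u - v]opprB dotvNl dotvNr opprK. Qed.

Lemma part1 : 0 < kappa0 -> beta_monotone 2 (fun u : 'cV[R]_n => A *m u).
Proof.
move=> hk; exists (kappa0 ^+ 2); first exact: exprn_gt0.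
move=> u v; rewrite (powR_mulrn 2 (vnorm_ge0 _)) -mulmxBr dotvC; exact: hA.
Qed.

Variable L : R.
Hypothesis hL : forall v, vnorm (A *m v) <= L * vnorm v.

Lemma part3_ord (al : R) u v : 0 < al -> 0 <= L -> vnorm v <= vnorm u ->
  (kappa0 ^+ 2 - al * L) * vnorm u `^ al * vnorm (u - v) ^+ 2
    <= Dm (fun x => (vnorm x `^ al) *: (A *m x)) u v.
Proof.
move=> al0 L0 ba; rewrite /Dm.
set a := vnorm u; set b := vnorm v; set w := u - v.
have -> : a `^ al *: (A *m u) - b `^ al *: (A *m v)
   = a `^ al *: (A *m w) + (a `^ al - b `^ al) *: (A *m v).
  by rewrite /w mulmxBr scalerBr scalerBl addrA subrK.
rewrite dotvDl !dotvZl.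
set P := a `^ al; set Q := b `^ al; set X := dotv (A *m w) w;
set Y := dotv (A *m v) w; set W := vnorm w.
have b0 : 0 <= b by exact: vnorm_ge0.
have W0 : 0 <= W by exact: vnorm_ge0.
have P0 : 0 <= P by exact: powR_ge0.
have PQ : 0 <= P - Q by rewrite subr_ge0; exact: powR_le (ltW al0) b0 ba.
have hX : kappa0 ^+ 2 * W ^+ 2 <= X by rewrite /X dotvC; exact: hA.
have hY : - (L * b * W) <= Y.
  have := CS (A *m v) w; rewrite -/W => h1.
  have h2 : vnorm (A *m v) * W <= L * b * W by rewrite ler_wpM2r // hL.
  have := ler_norm (- Y); rewrite normrN -/Y; have := le_trans h1 h2; lra.
have hK : (P - Q) * b <= al * P * (a - b) by exact: key_pow.
have hab : a - b <= W by exact: vnorm_revB.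
have e1 : P * (kappa0 ^+ 2 * W ^+ 2) <= P * X by rewrite ler_wpM2l.
have e2 : (P - Q) * (- (L * b * W)) <= (P - Q) * Y by rewrite ler_wpM2l.
have e3 : (P - Q) * b * (L * W) <= al * P * (a - b) * (L * W)
  by rewrite ler_wpM2r // mulr_ge0.
have e4 : al * P * (a - b) * (L * W) <= al * P * W * (L * W).
  apply: ler_wpM2r; first exact: mulr_ge0.
  by apply: ler_wpM2l => //; apply: mulr_ge0 => //; exact: ltW.
have -> : (kappa0 ^+ 2 - al * L) * P * W ^+ 2
  = P * (kappa0 ^+ 2 * W ^+ 2) - al * P * W * (L * W) by ring.
have E2 : (P - Q) * (- (L * b * W)) = - ((P - Q) * b * (L * W)) by ring.
rewrite E2 in e2.
lra.
Qed.

Lemma part3_ord2 (al : R) u v : 0 < al -> 0 <= L -> al * L <= kappa0 ^+ 2 ->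
  vnorm v <= vnorm u ->
  (kappa0 ^+ 2 - al * L) * (vnorm (u - v) / 2) `^ al * vnorm (u - v) ^+ 2
    <= Dm (fun x => (vnorm x `^ al) *: (A *m x)) u v.
Proof.
move=> al0 L0 aL ba; apply: le_trans (part3_ord al0 L0 ba).
apply: ler_wpM2r; first exact: sqr_ge0.
apply: ler_wpM2l; first by rewrite subr_ge0.
apply: powR_le; first exact: ltW.
  by apply: divr_ge0 => //; exact: vnorm_ge0.
have := vnormB u v; lra.
Qed.

Lemma part3_gen (al : R) u v : 0 < al -> 0 <= L -> al * L <= kappa0 ^+ 2 ->
  (kappa0 ^+ 2 - al * L) * (vnorm (u - v) / 2) `^ al * vnorm (u - v) ^+ 2
    <= Dm (fun x => (vnorm x `^ al) *: (A *m x)) u v.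
Proof.
move=> al0 L0 aL.
have [ba|ab] := leP (vnorm v) (vnorm u); first exact: part3_ord2.
rewrite Dm_sym -[u - v]opprB vnormN; apply: part3_ord2 => //; exact: ltW.
Qed.

End P3.

Section P2.
Variables (R : realType) (n : nat) (A S : 'M[R]_n) (kappa0 : R).
Hypothesis hk : 0 < kappa0.
Hypothesis hA : forall u : 'cV[R]_n, kappa0 ^+ 2 * vnorm u ^+ 2 <= dotv u (A *m u).
Hypothesis Asym : A^T = A.
Hypothesis hS : S^T *m S = A.

Let B (x y : 'cV[R]_n) := dotv x (A *m y).

Lemma BC x y : B x y = B y x.
Proof. by rewrite /B dotv_mulmx Asym dotvC. Qed.

Lemma Snorm x : vnorm (S *m x) ^+ 2 = B x x.
Proof. by rewrite vnorm_sq dotv_mulmx mulmxA hS dotvC. Qed.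

Lemma part2_core (al : R) u v : 0 < al ->
  2^-1 * (kappa0 / 2) `^ al * kappa0 ^+ 2 * vnorm (u - v) `^ (al + 2)
  <= Dm (fun x => (vnorm (S *m x) `^ al) *: (A *m x)) u v.
Proof.
move=> al0; rewrite /Dm.
set a := vnorm (S *m u); set b := vnorm (S *m v); set w := u - v.
set r := vnorm (S *m w); set W := vnorm w.
rewrite dotvBl !dotvZl.
set P := a `^ al; set Q := b `^ al.
have eD : P * dotv (A *m u) w - Q * dotv (A *m v) w
   = 2^-1 * (P + Q) * r ^+ 2 + 2^-1 * (P - Q) * (a ^+ 2 - b ^+ 2).
  rewrite /r /a /b !Snorm /w !(dotvBl, dotvBr) (dotvC (A *m u)) (dotvC (A *m v)).
  rewrite /B !mulmxBr !dotvBl !dotvBr (dotvC (A *m u) v) (dotvC (A *m v) v).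
  have -> : dotv v (A *m u) = dotv u (A *m v) by exact: (BC v u).
  by field.
rewrite eD.
have a0 : 0 <= a by exact: vnorm_ge0.
have b0 : 0 <= b by exact: vnorm_ge0.
have r0 : 0 <= r by exact: vnorm_ge0.
have W0 : 0 <= W by exact: vnorm_ge0.
have P0 : 0 <= P by exact: powR_ge0.
have Q0 : 0 <= Q by exact: powR_ge0.
have h2 : 0 <= (P - Q) * (a ^+ 2 - b ^+ 2).
  have [ab|ba] := leP a b.
    have : P <= Q by exact: powR_le (ltW al0) a0 ab.
    have : a ^+ 2 <= b ^+ 2 by rewrite ler_sqr.
    move=> h h'; rewrite -mulrNN mulr_ge0 // oppr_ge0 subr_le0 //.
  have : Q <= P by apply: powR_le (ltW al0) b0 (ltW ba).
  have : b ^+ 2 <= a ^+ 2 by rewrite ler_sqr // ltW.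
  by move=> h h'; rewrite mulr_ge0 // subr_ge0.
have rab : r <= a + b by rewrite /r /w mulmxBr; exact: vnormB.
have rW : kappa0 * W <= r.
  rewrite -(ler_pXn2r (isT : (0 < 2)%N)) ?nnegrE //; last by rewrite mulr_ge0 // ltW.
  by rewrite exprMn Snorm /B; exact: hA.
have hPQ : (r / 2) `^ al <= P + Q.
  have [ba|ab] := leP b a.
    apply: le_trans (_ : P <= _); last by lra.
    apply: powR_le; [exact: ltW | exact: divr_ge0 | lra].
  apply: le_trans (_ : Q <= _); last by lra.
  apply: powR_le; [exact: ltW | exact: divr_ge0 | lra].
have hW : (kappa0 / 2) `^ al * W `^ al <= (r / 2) `^ al.
  rewrite -powRM; [|apply: divr_ge0; [exact: ltW|done]|done].
  apply: powR_le; [exact: ltW| apply: mulr_ge0 => //; apply: divr_ge0 => //; exact: ltW|].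
  have -> : kappa0 / 2 * W = (kappa0 * W) / 2 by ring.
  by apply: ler_wpM2r => //; rewrite invr_ge0.
rewrite powR_add2 //.
have e1 : (kappa0 / 2) `^ al * W `^ al * (kappa0 ^+ 2 * W ^+ 2) <= (P + Q) * r ^+ 2.
  apply: ler_pM.
  - by apply: mulr_ge0; exact: powR_ge0.
  - by rewrite mulr_ge0 // sqr_ge0.
  - exact: le_trans hW hPQ.
  - rewrite -exprMn ler_sqr // nnegrE mulr_ge0 //; exact: ltW.
apply: le_trans (_ : 2^-1 * ((P + Q) * r ^+ 2) <= _); last first.
  have := h2; lra.
have -> : 2^-1 * (kappa0 / 2) `^ al * kappa0 ^+ 2 * (W `^ al * W ^+ 2)
  = 2^-1 * ((kappa0 / 2) `^ al * W `^ al * (kappa0 ^+ 2 * W ^+ 2)) by ring.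
by rewrite ler_pM2l // invr_gt0.
Qed.

End P2.

Section Uniq.
Local Open Scope sesquilinear_scope.
Variable (C : numClosedFieldType) (n : nat).

Lemma unitary_l (P : 'M[C]_n) : P \is unitarymx -> P^t* *m P = 1%:M.
Proof. by move=> Pu; rewrite -invmx_unitary // mulVmx // unitarymx_unit. Qed.

Lemma unitary_r (P : 'M[C]_n) : P \is unitarymx -> P *m P^t* = 1%:M.
Proof. by move/unitarymxP. Qed.

Lemma comm_diag_map (W : 'M[C]_n) (d : 'rV[C]_n) (g : C -> C) :
  W *m diag_mx d = diag_mx d *m W ->
  W *m diag_mx (map_mx g d) = diag_mx (map_mx g d) *m W.
Proof.
move=> WD.
  apply/matrixP => i j; rewrite mul_mx_diag mul_diag_mx !mxE.
move/matrixP: WD => /(_ i j); rewrite mul_mx_diag mul_diag_mx !mxE.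
have [->|dij] := eqVneq (d 0 i) (d 0 j); first by move=> _; rewrite mulrC.
move=> h; have : (d 0 j - d 0 i) * W i j = 0.
  by rewrite mulrBl -h (mulrC (d 0 j)) subrr.
move=> /eqP; rewrite mulf_eq0 subr_eq0 eq_sym (negbTE dij) /=.
by move=> /eqP ->; rewrite mulr0 mul0r.
Qed.

Lemma spec_uniq (P Q : 'M[C]_n) (d : 'rV[C]_n) (g : C -> C) :
  P \is unitarymx -> Q \is unitarymx ->
  P^t* *m diag_mx d *m P = Q^t* *m diag_mx d *m Q ->
  P^t* *m diag_mx (map_mx g d) *m P = Q^t* *m diag_mx (map_mx g d) *m Q.
Proof.
move=> Pu Qu E.
set W := Q *m P^t*.
have WD : W *m diag_mx d = diag_mx d *m W.
  have := congr1 (fun M => Q *m M *m P^t*) E.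
  rewrite !mulmxA unitary_r // mul1mx -!mulmxA unitary_r // mulmx1 !mulmxA.
  by move=> ->.
have WG := comm_diag_map g WD.
have := congr1 (fun M => Q^t* *m M *m P) WG.
rewrite /W !mulmxA unitary_l // mul1mx -!mulmxA unitary_l // mulmx1 !mulmxA.
by move=> ->.
Qed.

End Uniq.

Section SqR.
Local Open Scope sesquilinear_scope.
Variables (R : realType) (n : nat) (A : 'M[R]_n).
Hypothesis Asym : A^T = A.
Hypothesis hpd : forall u : 'cV[R]_n, u != 0 -> 0 < dotv u (A *m u).

Local Notation C := R[i].
Local Notation rc := (real_complex R).
Local Notation conjC := Num.Def.conjC.
Let Ac : 'M[C]_n := map_mx rc A.

Lemma conj_rc (x : R) : (rc x)^* = rc x.
Proof. exact: conjc_real. Qed.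

Lemma adj_real m p (M : 'M[R]_(m,p)) : (map_mx rc M)^t* = map_mx rc M^T.
Proof. by apply/matrixP => i j; rewrite !mxE conj_rc. Qed.

Lemma Ac_adj : Ac^t* = Ac.
Proof. by rewrite /Ac adj_real Asym. Qed.

Lemma Ac_normal : Ac \is normalmx.
Proof. by apply/normalmxP; rewrite Ac_adj. Qed.

Lemma Ac_herm : Ac \is hermsymmx.
Proof. by apply/is_hermitianmxP; rewrite expr0 scale1r Ac_adj. Qed.

Lemma Re_sum (I : Type) (r : seq I) (Pr : pred I) (F : I -> C) :
  complex.Re (\sum_(i <- r | Pr i) F i) = \sum_(i <- r | Pr i) complex.Re (F i).
Proof.
apply: (big_morph (@complex.Re R)) => //.
by move=> [a b] [c e].
Qed.

Lemma psd u : 0 <= dotv u (A *m u).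
Proof.
have [->|un0] := eqVneq u 0; first by rewrite dotv0l.
exact: ltW (hpd un0).
Qed.

Lemma q_real (z : 'rV[C]_n) : ((z *m Ac *m z^t*) 0 0)^* = (z *m Ac *m z^t*) 0 0.
Proof.
have E : (z *m Ac *m z^t*)^t* = z *m Ac *m z^t*.
  by rewrite !trmx_mul !map_mxM trmxCK Ac_adj mulmxA.
by rewrite -{2}E !mxE.
Qed.

Lemma q_ge0 (z : 'rV[C]_n) : 0 <= (z *m Ac *m z^t*) 0 0.
Proof.
have hr : (z *m Ac *m z^t*) 0 0 \is Num.real by rewrite CrealE q_real.
set xv : 'cV[R]_n := \col_k complex.Re (z 0 k).
set yv : 'cV[R]_n := \col_k complex.Im (z 0 k).
have hRe : complex.Re ((z *m Ac *m z^t*) 0 0) = dotv xv (A *m xv) + dotv yv (A *m yv).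
  rewrite mxE Re_sum.
  under eq_bigr do rewrite !mxE mulr_suml Re_sum.
  rewrite /dotv -big_split /= exchange_big /=; apply: eq_bigr => k _.
  rewrite !mxE !mulr_sumr -big_split /=; apply: eq_bigr => l _.
  rewrite !mxE.
  case: (z 0 k) => a1 b1; case: (z 0 l) => a2 b2 /=.
  ring.
move: hr hRe; case: ((z *m Ac *m z^t*) 0 0) => a b /=.
rewrite complex_real => /eqP -> ->; rewrite lecE /= eqxx /=.
by apply: addr_ge0; exact: psd.
Qed.

Let P := spectralmx Ac.
Let d := spectral_diag Ac.

Lemma Pu : P \is unitarymx.
Proof. exact: spectral_unitarymx. Qed.

Lemma EA : Ac = P^t* *m diag_mx d *m P.
Proof. rewrite -(invmx_unitary Pu); exact/orthomx_spectralP/Ac_normal. Qed.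

Lemma PAP : P *m Ac *m P^t* = diag_mx d.
Proof.
rewrite EA !mulmxA (unitary_r Pu) mul1mx -mulmxA (unitary_r Pu) mulmx1 //.
Qed.

Lemma d_ge0 j : 0 <= d 0 j.
Proof.
have <- : (diag_mx d) j j = d 0 j by rewrite mxE eqxx mulr1n.
rewrite -PAP.
suff -> : (P *m Ac *m P^t*) j j = (row j P *m Ac *m (row j P)^t*) 0 0 by exact: q_ge0.
rewrite !mxE; apply: eq_bigr => k _; rewrite !mxE; congr (_ * _); apply: eq_bigr => l _; by rewrite [row j P 0 l]mxE.
Qed.

Let g (x : C) : C := rc (Num.sqrt (complex.Re x)).
Let s := map_mx g d.
Let Sc := P^t* *m diag_mx s *m P.

Lemma Re_d_ge0 j : 0 <= complex.Re (d 0 j).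
Proof. by have := d_ge0 j; rewrite lecE => /andP[]. Qed.

Lemma d_eq j : rc (complex.Re (d 0 j)) = d 0 j.
Proof. exact/RRe_real/ger0_real/d_ge0. Qed.

Lemma s_sq j : s 0 j * s 0 j = d 0 j.
Proof.
rewrite mxE /g -rmorphM -expr2 sqr_sqrtr ?Re_d_ge0 //; exact: d_eq.
Qed.

Lemma s_conj : map_mx conjC s = s.
Proof. by apply/matrixP => i j; rewrite !mxE /g conj_rc. Qed.

Lemma Sc_sq : Sc *m Sc = Ac.
Proof.
rewrite /Sc EA -!mulmxA; congr (_ *m _); rewrite (mulmxA P) (unitary_r Pu) mul1mx mulmxA.
congr (_ *m _); rewrite mulmx_diag; congr diag_mx; apply/rowP => j.
by rewrite !mxE; have := s_sq j; rewrite mxE.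
Qed.

Lemma conj_adj m p (M : 'M[C]_(m,p)) : (map_mx conjC M)^t* = map_mx conjC (M^t*).
Proof. by apply/matrixP => i j; rewrite !mxE. Qed.

Let Q := map_mx conjC P.

Lemma Qu : Q \is unitarymx.
Proof.
apply/unitarymxP; rewrite /Q conj_adj -map_mxM (unitary_r Pu).
by rewrite map_mx1.
Qed.

Lemma Ac_conj : map_mx conjC Ac = Ac.
Proof. by apply/matrixP => i j; rewrite !mxE conj_rc. Qed.

Lemma d_conj : map_mx conjC d = d.
Proof. by apply/matrixP => i j; rewrite (ord1 i) !mxE conj_Creal //; apply/ger0_real/d_ge0. Qed.

Lemma EQ : P^t* *m diag_mx d *m P = Q^t* *m diag_mx d *m Q.
Proof.
rewrite -EA -{1}Ac_conj EA !map_mxM map_diag_mx d_conj /Q conj_adj //.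
Qed.

Lemma Sc_conj : map_mx conjC Sc = Sc.
Proof.
rewrite /Sc !map_mxM map_diag_mx s_conj -conj_adj.
by rewrite -(spec_uniq g Pu Qu EQ).
Qed.

Let S := map_mx (@complex.Re R) Sc.

Lemma S_map : map_mx rc S = Sc.
Proof.
apply/matrixP => i j; rewrite mxE [S i j]mxE RRe_real // CrealE.
by move/matrixP: Sc_conj => /(_ i j); rewrite [LHS]mxE => ->.
Qed.

Lemma Sc_adj : Sc^t* = Sc.
Proof.
rewrite /Sc !trmx_mul !map_mxM trmxCK tr_diag_mx map_diag_mx s_conj mulmxA //.
Qed.

Lemma S_sym : S^T = S.
Proof.
apply: (@map_mx_inj _ _ rc); rewrite -(map_trmx rc S) S_map.
by rewrite -{2}Sc_adj -{1}Sc_conj map_trmx.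
Qed.

Lemma S_sq : S *m S = A.
Proof. by apply: (@map_mx_inj _ _ rc); rewrite map_mxM S_map Sc_sq. Qed.

Lemma dotv_def (u v : 'cV[R]_n) : dotv u v = (u^T *m v) 0 0.
Proof. by rewrite /dotv mxE; apply: eq_bigr => i _; rewrite mxE. Qed.

Lemma form_real (M : 'M[R]_n) (u : 'cV[R]_n) :
  (map_mx rc u^T *m map_mx rc M *m (map_mx rc u^T)^t*) 0 0 = rc (dotv u (M *m u)).
Proof.
by rewrite adj_real trmxK -!map_mxM mxE dotv_def mulmxA.
Qed.

Lemma form_diag (w : 'rV[C]_n) (t : 'rV[C]_n) :
  (w *m diag_mx t *m w^t*) 0 0 = \sum_j t 0 j * (w 0 j * (w 0 j)^*).
Proof.
rewrite mul_mx_diag mxE; apply: eq_bigr => j _; rewrite !mxE.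
by rewrite mulrCA mulrA.
Qed.

Lemma form_PdP (uc : 'rV[C]_n) (t : 'rV[C]_n) :
  uc *m (P^t* *m diag_mx t *m P) *m uc^t*
  = (uc *m P^t*) *m diag_mx t *m (uc *m P^t*)^t*.
Proof. by rewrite trmx_mul map_mxM trmxCK !mulmxA. Qed.

Lemma S_pd (u : 'cV[R]_n) : u != 0 -> 0 < dotv u (S *m u).
Proof.
move=> un0; have hA := hpd un0.
set uc := map_mx rc u^T; set w := uc *m P^t*.
have eA : rc (dotv u (A *m u)) = \sum_j d 0 j * (w 0 j * (w 0 j)^*).
  by rewrite -form_real -/uc -/Ac EA form_PdP form_diag.
have eS : rc (dotv u (S *m u)) = \sum_j s 0 j * (w 0 j * (w 0 j)^*).
  by rewrite -form_real -/uc S_map /Sc form_PdP form_diag.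
have m0 j : 0 <= w 0 j * (w 0 j)^* by exact: mul_conjC_ge0.
have s0 j : 0 <= s 0 j.
  by rewrite mxE /g -(rmorph0 rc) lecR sqrtr_ge0.
have sum0 : 0 <= \sum_j s 0 j * (w 0 j * (w 0 j)^*).
  by apply: sumr_ge0 => j _; exact: mulr_ge0.
rewrite -ltcR -eS in sum0 *.
rewrite lt_def sum0 andbT; apply/negP => /eqP h0.
have : rc (dotv u (A *m u)) = 0.
  rewrite eA big1 // => j _.
  move: h0; rewrite eS => /eqP; rewrite psumr_eq0 => [/allP /(_ j (mem_index_enum _)) /eqP hj|j' _]; last by apply: mulr_ge0.
  by rewrite -s_sq -mulrA hj mulr0.
move=> /eqP; rewrite -(rmorph0 rc) (inj_eq (@complexI R)) => /eqP h.
by move: hA; rewrite h ltxx.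
Qed.

Lemma sqrt_exists : exists S : 'M[R]_n, posdefmx S /\ S *m S = A.
Proof. exists S; split; [split; [exact: S_sym | exact: S_pd] | exact: S_sq]. Qed.

End SqR.

End Helpers.
Import Helpers.

Theorem mainTheorem10 (R : realType) (n : nat) (A : 'M[R]_n) (kappa0 : R)
  (hk : 0 < kappa0)
  (hA : forall u : 'cV[R]_n, kappa0 ^+ 2 * vnorm u ^+ 2 <= dotv u (A *m u)) :
  beta_monotone 2 (fun u : 'cV[R]_n => A *m u)
  /\ (symmx A -> forall alpha : R, 0 < alpha ->
        beta_monotone (alpha + 2)
          (fun u : 'cV[R]_n => (vnorm (sqrtmx A *m u) `^ alpha) *: (A *m u)))
  /\ (forall alpha : R, 0 < alpha ->
        (alpha = kappa0 ^+ 2 / opnorm A ->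
           monotone_map (fun u : 'cV[R]_n => (vnorm u `^ alpha) *: (A *m u)))
        /\ (alpha < kappa0 ^+ 2 / opnorm A ->
           beta_monotone (alpha + 2)
             (fun u : 'cV[R]_n => (vnorm u `^ alpha) *: (A *m u)))).
Proof.
split; first exact: part1 hA hk.
split.
  move=> Asym al al0.
  have hpd : forall u : 'cV[R]_n, u != 0 -> 0 < dotv u (A *m u).
    move=> u un0; apply: lt_le_trans (hA u); apply: mulr_gt0; first exact: exprn_gt0.
    apply: exprn_gt0; rewrite lt_neqAle vnorm_ge0 andbT; apply/negP => /eqP /esym /vnorm_eq0.
    by apply/eqP.
  have [Sx HS] := sqrt_exists Asym hpd.
  have [[Ssym _] Ssq] : posdefmx (sqrtmx A) /\ sqrtmx A *m sqrtmx A = A.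
    exact: (epsilon_spec (inhabits 0) (fun S : 'M[R]_n => posdefmx S /\ S *m S = A) (ex_intro _ Sx HS)).
  have hS : (sqrtmx A)^T *m sqrtmx A = A by rewrite Ssym.
  exists (2^-1 * (kappa0 / 2) `^ al * kappa0 ^+ 2).
    by rewrite !mulr_gt0 ?exprn_gt0 ?invr_gt0 ?ltr0n ?powR_gt0 ?divr_gt0.
  move=> u v; exact: (part2_core hk hA Asym hS u v al0).
move=> al al0.
have hL := opnorm_le A.
have L0 : al <= kappa0 ^+ 2 / opnorm A -> 0 < opnorm A.
  move=> h; rewrite ltNge; apply/negP => hL0.
  have : kappa0 ^+ 2 / opnorm A <= 0.
    by apply: mulr_ge0_le0; [exact: sqr_ge0 | rewrite invr_le0].
  lra.
split.
  move=> aE u v.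
  have Lp : 0 < opnorm A by apply: L0; rewrite aE.
  have aL : al * opnorm A = kappa0 ^+ 2 by rewrite aE mulfVK // gt_eqF.
  have aL2 : al * opnorm A <= kappa0 ^+ 2 by rewrite aL.
  have := part3_gen hA hL u v al0 (ltW Lp) aL2.
  by rewrite aL subrr !mul0r.
move=> alt.
have Lp := L0 (ltW alt).
have aL : al * opnorm A < kappa0 ^+ 2 by rewrite -ltr_pdivlMr.
exists ((kappa0 ^+ 2 - al * opnorm A) * (2^-1) `^ al).
  by rewrite mulr_gt0 ?subr_gt0 // powR_gt0 // invr_gt0.
move=> u v; have := part3_gen hA hL u v al0 (ltW Lp) (ltW aL).
rewrite powR_add2 ?vnorm_ge0 // powRM ?vnorm_ge0 ?invr_ge0 //.
set W := vnorm (u - v).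
have -> : (kappa0 ^+ 2 - al * opnorm A) * 2^-1 `^ al * (W `^ al * W ^+ 2)
  = (kappa0 ^+ 2 - al * opnorm A) * (W `^ al * 2^-1 `^ al) * W ^+ 2 by ring.
done.
Qed.
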